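(* Let $X$ be a topological space and $q,k\ge1$ integers. If $X$ has finitely many connected components and all of them are contractible, then $X^q_k$ also has finitely many connected components and all of them are contractible.
   Context: $X^q_k=\{(x_1,\dots,x_q)\in X^q:|\{x_1,\dots,x_q\}|\le k\}$, with the subspace topology of the product $X^q$. *)

(* Defs.v *)
From HB Require Import structures.
From mathcomp Require Import all_boot all_order all_algebra.
From mathcomp Require Import all_classical all_reals all_analysis.
From mathcomp Require Import Rstruct Rstruct_topology.
From Stdlib Require Import Reals.
Set Implicit Arguments. Unset Strict Implicit. Unset Printing Implicit Defensive.
Import Order.TTheory GRing.Theory Num.Theory.
Local Open Scope classical_set_scope.
Local Open Scope ring_scope.

Definition unit_interval : set R := `[0%R, 1%R]%classic.

Definition contractible (T : topologicalType) (C : set T) : Prop :=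
  exists c : T, C c /\
  exists H : R * T -> T,
    {within unit_interval `*` C, continuous H} /\
    (forall t x, unit_interval t -> C x -> C (H (t, x))) /\
    (forall x, C x -> H (0%R, x) = x) /\
    (forall x, C x -> H (1%R, x) = c).

Definition components (T : topologicalType) (A : set T) : set (set T) :=
  [set connected_component A x | x in A].

Definition fin_contractible_components (T : topologicalType) (A : set T) : Prop :=
  finite_set (components A) /\ (forall C, components A C -> contractible C).

(* X^q_k = { (x_1,..,x_q) in X^q : |{x_1,..,x_q}| <= k }, as a subset of the
   product space X^q = {ptws 'I_q -> X} (product topology). *)
Definition Xqk (X : topologicalType) (q k : nat) : set {ptws 'I_q -> X} :=
  [set x | (range x #<= [set: 'I_k])%card].

(* Main.v *)
Require Import Defs.
From HB Require Import structures.
From mathcomp Require Import all_boot all_order all_algebra.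
From mathcomp Require Import all_classical all_reals all_analysis.
From mathcomp Require Import Rstruct Rstruct_topology.
From Stdlib Require Import Reals.
Local Open Scope classical_set_scope.

Lemma ptws_cvg (I : Type) (X : topologicalType) (F : set_system {ptws I -> X})
  (f : {ptws I -> X}) : Filter F ->
  (forall i, (fun g : I -> X => g i) @ F --> f i) -> F --> f.
Proof.
move=> FF Fi.
apply/cvg_sup => i A /=.
rewrite (@nbhsE (initial_topology (fun g : I -> X => g i))) => -[B [ [U oU <-] Bf] BA].
apply: filterS BA _; apply: Fi; apply: open_nbhs_nbhs; split => //.
Qed.

Lemma within_map (T U : topologicalType) (A : set T) (B : set U) (f : T -> U) x :
  {for x, continuous f} -> (forall y, A y -> B (f y)) ->
  f @ within A (nbhs x) --> within B (nbhs (f x)).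
Proof.
move=> cf AB P /= Pn; have := cf _ Pn; rewrite /within /= !nbhs_simpl /= => H. by apply: filterS H => y + Ay; apply; exact: AB.

Qed.

Lemma glue (T U : topologicalType) (D E B : set T) (g h : T -> U) x :
  nbhs x E -> (forall y, D y -> E y -> B y /\ g y = h y) -> g x = h x ->
  h @ within B (nbhs x) --> h x -> g @ within D (nbhs x) --> g x.
Proof.
move=> Ex DEB gx hc; rewrite gx => P /hc /=; rewrite /within /= => Hn.
rewrite !nbhs_simpl /= in Hn *.
near=> y => Dy.
have [By ->] : B y /\ g y = h y by apply: DEB => //; near: y.
by move: By; near: y.
Unshelve. all: by end_near.

Qed.

Lemma phi_cont (I : eqType) (X : topologicalType) (i : I) (p : R * {ptws I -> X}) :
  {for p, continuous (fun p : R * {ptws I -> X} => (p.1, p.2 i))}.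
Proof.
apply: (@cvg_pair _ _ _ _ (nbhs p.1) (nbhs (p.2 i))); first exact: cvg_fst.
apply: (@cvg_comp _ _ _ snd (fun g : {ptws I -> X} => g i) _ (nbhs p.2)).
  exact: cvg_snd.
exact: (@proj_continuous _ (fun=> X) i p.2).
Qed.

Lemma pair_cont (X : topologicalType) (x : X) (t : R) :
  {for t, continuous (fun s : R => (s, x))}.
Proof. apply: (@cvg_pair _ _ _ _ (nbhs t) (nbhs x)); [exact: cvg_id| exact: cvg_cst]. Qed.

Lemma comp_open (X : topologicalType) :
  finite_set (components [set: X]) ->
  forall y : X, open (connected_component [set: X] y).
Proof.
move=> fin y.
have -> : connected_component [set: X] y =
  ~` \bigcup_(D in [set D | components [set: X] D /\ ~ D y]) D.
  apply/seteqP; split => z.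
    move=> yz [D [[w _ <-] Dy] wz]; apply: Dy.
    have -> : connected_component [set: X] w = connected_component [set: X] z.
      exact: same_connected_component.
    rewrite -(same_connected_component yz).
    exact: connected_component_refl.
  move=> nz; apply: contrapT => nyz; apply: nz.
  exists (connected_component [set: X] z); last exact: connected_component_refl.
  split; first by exists z.
  move=> zy; apply: nyz; exact: connected_component_sym.
rewrite openC; apply: closed_bigcup.
  by apply: sub_finite_set fin => D [].
move=> D [[w _ <-] _]; apply: component_closed; exact: closedT.
Qed.

Lemma partA (X : topologicalType) : fin_contractible_components [set: X] ->
  exists G : R * X -> X,
  [/\ forall t y, unit_interval t ->
        G @ within (unit_interval `*` setT) (nbhs (t, y)) --> G (t, y),
      forall t y, unit_interval t -> connected_component setT y (G (t, y)),
      forall y, G (0%R, y) = y &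
      forall y z, connected_component setT y z -> G (1%R, y) = G (1%R, z)].
Proof.
move=> [fin ctr].
have [[x0 _]|X0] := pselect (exists x : X, True); last first.
  by exists snd; split => [t y|t y|y|y]; exfalso; apply: X0; exists y.
have ex : forall C : set X, exists ch : (X * (R * X -> X))%type,
  components setT C ->
    C ch.1 /\ {within unit_interval `*` C, continuous ch.2} /\
    (forall t x, unit_interval t -> C x -> C (ch.2 (t, x))) /\
    (forall x, C x -> ch.2 (0%R, x) = x) /\
    (forall x, C x -> ch.2 (1%R, x) = ch.1).
  move=> C; have [cC|ncC] := pselect (components setT C); last first.
    by exists (x0, snd).
  have [c [Cc [H [Hc [HC [H0 H1]]]]]] := ctr C cC.
  by exists (c, H) => _ /=.
have [ch chP] := choice ex.
pose comp := connected_component [set: X].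
have compP y : components setT (comp y) by exists y.
have compr y : comp y y by exact: connected_component_refl.
have compE y z : comp y z -> comp z = comp y.
  by move=> yz; rewrite /comp (same_connected_component yz).
exists (fun p => (ch (comp p.2)).2 p); split.
- move=> t y It.
  have [_ [Hc [HC [H0 H1]]]] := chP _ (compP y).
  apply: (@glue _ _ _ (setT `*` comp y) (unit_interval `*` comp y) _ (ch (comp y)).2).
  + exists (setT, comp y) => //=; split; first exact: filterT.
    by apply: open_nbhs_nbhs; split; [exact: comp_open | exact: compr].
  + move=> [s z] [Is _] [_ yz] /=; split => //.
    by rewrite (compE _ _ yz).
  + by [].
  + by move/subspace_continuousP : Hc; apply; split => //=.
- move=> t y It /=.
  have [_ [Hc [HC [H0 H1]]]] := chP _ (compP y).
  exact: HC.
- move=> y /=; have [_ [Hc [HC [H0 H1]]]] := chP _ (compP y).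
  exact: H0.
- move=> y z yz /=; rewrite (compE _ _ yz).
  have [_ [Hc [HC [H0 H1]]]] := chP _ (compP y).
  by rewrite !H1.
Qed.

Import Order.TTheory GRing.Theory Num.Theory.

Lemma I0 : unit_interval 0%R.
Proof. by rewrite /unit_interval/= in_itv/= lexx ler01. Qed.
Lemma I1 : unit_interval 1%R.
Proof. by rewrite /unit_interval/= in_itv/= lexx ler01. Qed.

Theorem lemma5p12 (X : topologicalType) (q k : nat) :
  (1 <= q)%N -> (1 <= k)%N ->
  fin_contractible_components [set: X] ->
  fin_contractible_components (@Xqk X q k).
Proof.
move=> q1 k1 hX.
have [G [Gc GC G0 G1]] := @partA X hX.
have fin := hX.1.
pose comp := connected_component [set: X].
have compE y z : comp y z -> comp z = comp y.
  by move=> yz; rewrite /comp (same_connected_component yz).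
have compr y : comp y y by exact: connected_component_refl.
pose Gq := fun p : R * {ptws 'I_q -> X} => (fun i => G (p.1, p.2 i)) : {ptws 'I_q -> X}.
pose S := fun x0 : {ptws 'I_q -> X} =>
  [set x : {ptws 'I_q -> X} | Xqk k x /\ forall i, comp (x i) = comp (x0 i)].
have F1 t x : Xqk k x -> Xqk k (Gq (t, x)).
  rewrite /Xqk /= => xk.
  apply: (card_le_trans _ xk); apply: (card_le_trans _ (card_image_le (fun y => G (t, y)) _)).
  by apply: subset_card_le => _ [i _ <-]; exists (x i) => //; exists i.
have F2 x0 t x : unit_interval t -> S x0 x -> S x0 (Gq (t, x)).
  move=> It [xk xc]; split; first exact: F1.
  by move=> i /=; rewrite -xc; apply: compE; exact: GC.
have F3 x : Gq (0%R, x) = x by apply: funext => i; rewrite /Gq /= G0.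
have F4 x0 x : S x0 x -> Gq (1%R, x) = Gq (1%R, x0).
  move=> [_ xc]; apply: funext => i; rewrite /Gq /=; apply: G1.
  by change (comp (x i) (x0 i)); rewrite xc.
have F5 (A : set {ptws 'I_q -> X}) t x : unit_interval t ->
    Gq @ within (unit_interval `*` A) (nbhs (t, x)) --> Gq (t, x).
  move=> It; apply: ptws_cvg => i.
  apply: (@cvg_comp _ _ _ (fun p : R * {ptws 'I_q -> X} => (p.1, p.2 i)) G _
     (within (unit_interval `*` setT) (nbhs (t, x i)))).
    apply: (@within_map _ _ _ _ _ _ (phi_cont _ _ i (t, x))).
    by move=> [s y] [Is _].

  exact: Gc.
have F6 x0 : {within unit_interval `*` S x0, continuous Gq}.
  apply/subspace_continuousP => -[t x] [It Sx]; exact: F5.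
have F7 x0 : Xqk k x0 -> connected (S x0).
  move=> x0k.
  have -> : S x0 = \bigcup_(x in S x0) ((fun t => Gq (t, x)) @` unit_interval).
    apply/seteqP; split => [x Sx|y [x Sx [t It <-]]]; last exact: F2.
    by exists x => //; exists 0%R; [exact: I0 | exact: F3].
  apply: bigcup_connected.
    exists (Gq (1%R, x0)) => x Sx; exists 1%R; first exact: I1.
    exact: F4.
  move=> x Sx; apply: connected_continuous_connected.
    exact: segment_connected.
  apply/subspace_continuousP => t It.
  apply: (@cvg_comp _ _ _ (fun s : R => (s, x)) Gq _
     (within (unit_interval `*` S x0) (nbhs (t, x)))).
    apply: (@within_map _ _ _ _ _ _ (pair_cont _ x t)).
    by move=> s Is.
  exact: F5.
have F8 x0 : Xqk k x0 -> connected_component (Xqk k) x0 = S x0.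
  move=> x0k; apply/seteqP; split; last first.
    apply: connected_component_max.
    - by split.
    - by move=> x [].
    - exact: F7.
  move=> y [B [Bx0 BX Bc By]]; split; first exact: BX.
  move=> i.
  have : (fun g : {ptws 'I_q -> X} => g i) @` B `<=` comp (x0 i).
    apply: connected_component_max => //.
      by exists x0.
    apply: connected_continuous_connected => //.
    apply: continuous_subspaceT.
    exact: (@proj_continuous _ (fun=> X) i).
  move=> /(_ (y i)) yi.
  apply: compE; apply: yi; by exists y.
split.
- have [s sE] := (finite_seqP _).1 fin.
  pose Psi := fun kap : 'I_q -> set X =>
    [set y : {ptws 'I_q -> X} | Xqk k y /\ forall i, comp (y i) = kap i].
  pose hmap := fun h : {ffun 'I_q -> 'I_(size s)} => (fun i => nth set0 s (h i)).
  apply: (@sub_finite_set _ _ (Psi @` (hmap @` setT))); last first.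
    by apply: finite_image; apply: finite_image; exact: finite_finset.
  move=> C [x0 x0k <-]; rewrite F8 //.
  exists (fun i => comp (x0 i)); last by [].
  have idx i : (index (comp (x0 i)) s < size s)%N.
    rewrite index_mem.
    have : [set` s] (comp (x0 i)) by rewrite -sE; exists (x0 i).
    by [].
  exists [ffun i => Ordinal (idx i)] => //.
  apply: funext => i; rewrite /hmap ffunE /=.
  apply: nth_index.
  have : [set` s] (comp (x0 i)) by rewrite -sE; exists (x0 i).
  by [].
- move=> C [x0 x0k <-]; rewrite F8 //.
  exists (Gq (1%R, x0)); split; first exact: F2 I1 _.
  exists Gq; split; first exact: F6.
  split; first by move=> t x It Sx; exact: F2.
  split; first by move=> x _; exact: F3.
  by move=> x Sx; exact: F4.
Qed.
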